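(* Let $\lambda\in\Lambda(n,r)$ and let $\underline m,\underline p$ be decompositions of $n$ with $\underline m\le\underline p$. Then $S_0(n,r)\,o_{\lambda,\underline m}\subseteq S_0(n,r)\,o_{\lambda,\underline p}$, and this inclusion of left $S_0(n,r)$-modules splits (so $S_0(n,r)o_{\lambda,\underline m}$ is a direct summand of $S_0(n,r)o_{\lambda,\underline p}$).
   Context: Setup: Fix positive integers $n,r$ and a field $k$. $\Lambda(n,r)$: compositions of $r$ into $n$ nonnegative parts. $\Theta(n,r)$: $n\times n$ nonnegative integer matrices with entry sum $r$, with row/column-sum vectors $\mathrm{ro}(A),\mathrm{co}(A)$. For an $r$-dimensional $V$ (finite or algebraically closed field), $\mathcal F_\lambda$ denotes flags $0=V_0\subseteq\cdots\subseteq V_n=V$ with $\dim V_i/V_{i-1}=\lambda_i$; $GL(V)$-orbits $e_A$ on pairs of flags correspond to $A\in\Theta(n,r)$ via $a_{ij}=\dim(V_i\cap V'_j)-\dim(V_i\cap V'_{j-1}+V_{i-1}\cap V'_j)$. The $0$-Schur algebra $S_0(n,r)$ (specialization at $q=0$ of the $q$-Schur algebra, tensored with $k$) has basis $\{e_A\}$ with $e_Ae_B=0$ if $\mathrm{co}(A)\ne\mathrm{ro}(B)$, otherwise $e_Ae_B$ is the unique open orbit among pairs $(f,h)$ with $(f,g)\in e_A,(g,h)\in e_B$ for some $g$. $k_\lambda=e_{\mathrm{diag}(\lambda)}$, $o_\lambda$ the open orbit in $\mathcal F_\lambda\times\mathcal F_\lambda$. For a decomposition $\underline p=(p_1,\dots,p_s)$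 of $n$ (positive integers summing to $n$), $\lambda^i=(\lambda_{p_1+\cdots+p_{i-1}+1},\dots,\lambda_{p_1+\cdots+p_i})$ and $o_{\lambda,\underline p}=e_A$ with $A$ block diagonal (blocks of sizes $p_i$), $i$-th block the matrix of the open orbit $o_{\lambda^i}$, other entries $0$; these are idempotents. $\underline m\le\underline p$ means $\underline p$ refines $\underline m$ (each $m_i$ is a sum of consecutive entries of $\underline p$). *)

(* Defs.v *)
From HB Require Import structures.
From mathcomp Require Import all_boot all_order all_algebra.
Set Implicit Arguments. Unset Strict Implicit. Unset Printing Implicit Defensive.
Import Order.TTheory GRing.Theory.

(* (entries are automatically <= r, so we store them in 'I_r.+1)           *)
Definition mxT (n r : nat) := {ffun 'I_n * 'I_n -> 'I_r.+1}.
Definition Theta (n r : nat) :=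
  {A : mxT n r | \sum_(ij : 'I_n * 'I_n) (A ij : nat) == r}.

Definition entry n r (A : Theta n r) (i j : 'I_n) : nat := val A (i, j).
Definition ro n r (A : Theta n r) (i : 'I_n) : nat := \sum_(j < n) entry A i j.
Definition co n r (A : Theta n r) (j : 'I_n) : nat := \sum_(i < n) entry A i j.

(* cumN A i j = sum_{s <= i, t <= j} a_{st} (1-based), i.e. dim (V_i cap V'_j)
   for a pair of flags in the orbit e_A; i, j range over 0..n. *)
Definition cumN n r (A : Theta n r) (i j : nat) : nat :=
  \sum_(s < n | s < i) \sum_(t < n | t < j) entry A s t.

Definition cumc n (mu : 'I_n -> nat) (k : nat) : nat := \sum_(t < n | t < k) mu t.

(* The generic (open-orbit) composition e_A e_B, for co A = ro B = mu:
   dim (f_i cap h_j) = max_k (dim (f_i cap g_k) + dim (g_k cap h_j) - dim g_k). *)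
Definition prodN n r (A B : Theta n r) (i j : nat) : nat :=
  \max_(kk < n.+1) (cumN A i kk + cumN B kk j - cumc (co A) kk).

(* genprod A B C <=> co A = ro B and e_A e_B = e_C *)
Definition genprod n r (A B C : Theta n r) : bool :=
  [forall i : 'I_n, co A i == ro B i] &&
  [forall i : 'I_n.+1, forall j : 'I_n.+1, cumN C i j == prodN A B i j].

(* S_0(n,r) (tensored with k): k-linear combinations of the basis e_A.     *)
Notation S0 k n r := {ffun Theta n r -> k}.

Definition ebas (k : fieldType) n r (A : Theta n r) : S0 k n r :=
  [ffun C => ((C == A)%:R)%R].

(* bilinear extension of e_A e_B = e_{A*B} (or 0 if co A <> ro B) *)
Definition smul (k : fieldType) n r (x y : S0 k n r) : S0 k n r :=
  [ffun C => (\sum_(A : Theta n r) \sum_(B : Theta n r)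
               x A * y B * (genprod A B C)%:R)%R].

Definition in_lideal (k : fieldType) n r (o x : S0 k n r) : Prop :=
  exists s : S0 k n r, x = smul s o.

(* Decompositions of n and the order m <= p (p refines m).                 *)
Definition is_decomp (n : nat) (p : seq nat) : bool :=
  all (fun x => 0 < x) p && (sumn p == n).

Definition refines (m p : seq nat) : Prop :=
  exists ss : seq (seq nat), flatten ss = p /\ map sumn ss = m.

Definition psums (p : seq nat) : seq nat :=
  [seq sumn (take i p) | i <- iota 0 (size p).+1].
Definition blk_start (p : seq nat) (i : nat) : nat :=
  \max_(b <- psums p | b <= i) b.
Definition blk_end (n : nat) (p : seq nat) (i : nat) : nat :=
  \big[minn/n]_(b <- psums p | i < b) b.

(* entries of the matrix of o_{lambda,p}: block diagonal, the block on
   indices [s,e) being the matrix of the open orbit o_{lambda^b}, i.e. the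
   generic pair of flags: local dim (f_a cap h_b) = max(0, |a| + |b| - |lambda^b|). *)
Definition olp_entry n (lam : 'I_n -> nat) (p : seq nat) (i j : 'I_n) : nat :=
  if blk_start p i == blk_start p j then
    let s := blk_start p i in
    let e := blk_end n p i in
    let L := cumc lam in
    let M := fun a b => ((L a - L s) + (L b - L s)) - (L e - L s) in
    (M i.+1 j.+1 + M i j) - (M i j.+1 + M i.+1 j)
  else 0.

Definition olp (k : fieldType) n r (lam : 'I_n -> nat) (p : seq nat) : S0 k n r :=
  [ffun C => ([forall i : 'I_n, forall j : 'I_n, entry C i j == olp_entry lam p i j]%:R)%R].

Definition sscale (k : fieldType) n r (c : k) (x : S0 k n r) : S0 k n r :=
  [ffun C => (c * x C)%R].

(* Main.v *)
Require Import Defs.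
From HB Require Import structures.
From mathcomp Require Import all_boot all_order all_algebra.
From mathcomp Require Import zify.
Set Implicit Arguments. Unset Strict Implicit. Unset Printing Implicit Defensive.

Definition charP (I : seq nat) (x M : nat -> nat) (P : nat) : Prop :=
  (forall k, k \in I -> x k <= P + M k) /\ exists2 k, k \in I & x k = P + M k.

Lemma charP_uniq I x M P P' : charP I x M P -> charP I x M P' -> P = P'.
Proof.
move=> [H1 [k1 I1 E1]] [H2 [k2 I2 E2]].
have := H2 _ I1; have := H1 _ I2; lia.
Qed.

Lemma bigmax_seq_att (s : seq nat) (F : nat -> nat) :
  \max_(b <- s) F b = 0 \/ exists2 b, b \in s & \max_(b <- s) F b = F b.
Proof.
elim: s => [|a s IH]; first by left; rewrite big_nil.
rewrite big_cons; case: IH => [->|[b bs ->]].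
  by right; exists a; rewrite ?inE ?eqxx // maxn0.
case: (leqP (F a) (F b)) => h.
  by right; exists b; rewrite ?inE ?bs ?orbT //; apply/maxn_idPr.
by right; exists a; rewrite ?inE ?eqxx //; apply/maxn_idPl/ltnW.
Qed.

Lemma charP_max I x M : (exists2 k0, k0 \in I & x k0 = M k0) ->
  charP I x M (\max_(k <- I) (x k - M k)).
Proof.
move=> [k0 Ik0 E0]; split.
  move=> k Ik; have := leq_bigmax_seq (P := xpredT) (F := fun k => x k - M k) k Ik isT.
  lia.
case: (bigmax_seq_att I (fun k => x k - M k)) => [->|[b Ib Eb]].
  by exists k0 => //; lia.
case: (posnP (\max_(k <- I) (x k - M k))) => [->|pos].
  by exists k0 => //; lia.
by exists b => //; rewrite Eb in pos *; lia.
Qed.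

Lemma charP_eq_in I x y M P : {in I, x =1 y} -> charP I x M P -> charP I y M P.
Proof.
move=> e [H1 [k Ik Ek]]; split.
  by move=> k' Ik'; rewrite -e //; apply: H1.
by exists k => //; rewrite -e.
Qed.

Definition charT (I : seq nat) (x : nat -> nat -> nat) (M N : nat -> nat) (T : nat) :=
  (forall k l, k \in I -> l \in I -> x k l <= T + M k + N l) /\
  exists k, exists l, [/\ k \in I, l \in I & x k l = T + M k + N l].

Lemma charT_uniq I x M N T T' : charT I x M N T -> charT I x M N T' -> T = T'.
Proof.
move=> [H1 [k1 [l1 [I1 J1 E1]]]] [H2 [k2 [l2 [I2 J2 E2]]]].
have := H2 _ _ I1 J1; have := H1 _ _ I2 J2; lia.
Qed.

Lemma charT_left I (a c : nat -> nat) (b : nat -> nat -> nat) d M N T :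
  (forall l, l \in I -> charP I (fun k => a k + b k l) M (d l)) ->
  charP I (fun l => d l + c l) N T ->
  charT I (fun k l => a k + b k l + c l) M N T.
Proof.
move=> Hd [HT [l0 Il0 El0]]; split.
  move=> k l Ik Il; have [h1 _] := Hd l Il; have := h1 k Ik; have := HT l Il; lia.
have [_ [k0 Ik0 Ek0]] := Hd l0 Il0.
exists k0, l0; split => //; lia.
Qed.

Lemma charT_right I (a c : nat -> nat) (b : nat -> nat -> nat) f M N Q :
  (forall k, k \in I -> charP I (fun l => b k l + c l) N (f k)) ->
  charP I (fun k => a k + f k) M Q ->
  charT I (fun k l => a k + b k l + c l) M N Q.
Proof.
move=> Hf [HQ [k0 Ik0 Ek0]]; split.
  move=> k l Ik Il; have [h1 _] := Hf k Ik; have := h1 l Il; have := HQ k Ik; lia.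
have [_ [l0 Il0 El0]] := Hf k0 Ik0.
exists k0, l0; split => //; lia.
Qed.

Section Cum.
Variables n r : nat.

Lemma sum_ltS (F : 'I_n -> nat) i (h : i < n) :
  \sum_(s < n | s < i.+1) F s = \sum_(s < n | s < i) F s + F (Ordinal h).
Proof.
rewrite (bigD1 (Ordinal h)) //= addnC; congr (_ + _).
apply: eq_bigl => s; rewrite ltnS -val_eqE /= ltn_neqAle andbC.
by case: (s < i) (s <= i) (s != i :> nat) (@ltnW s i) => [] [] [] //= /(_ isT).
Qed.

Lemma sum_ltge (F : 'I_n -> nat) i : n <= i ->
  \sum_(s < n | s < i) F s = \sum_(s < n) F s.
Proof. by move=> h; apply: eq_bigl => s; apply: leq_trans h. Qed.

Lemma sum_lt0 (F : 'I_n -> nat) : \sum_(s < n | s < 0) F s = 0.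
Proof. by rewrite big_pred0. Qed.

Lemma sum_mkc (F : 'I_n -> nat) i :
  \sum_(s < n | s < i) F s = \sum_(s < n) ((s < i) * F s).
Proof. by rewrite big_mkcond; apply: eq_bigr => s _; case: (s < i); rewrite ?mul1n. Qed.

Lemma cumc0 (f : 'I_n -> nat) : cumc f 0 = 0.
Proof. exact: sum_lt0. Qed.

Lemma cumcS (f : 'I_n -> nat) t (h : t < n) : cumc f t.+1 = cumc f t + f (Ordinal h).
Proof. exact: sum_ltS. Qed.

Lemma cumc_mono (f : 'I_n -> nat) a b : a <= b -> cumc f a <= cumc f b.
Proof.
move=> ab; rewrite /cumc !sum_mkc; apply: leq_sum => s _.
by apply: leq_mul => //; case: (ltnP s a) => // /leq_trans /(_ ab) ->.
Qed.

Lemma cumc_ext (f g : 'I_n -> nat) a : f =1 g -> cumc f a = cumc g a.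
Proof. by move=> e; apply: eq_bigr => s _. Qed.

Lemma cumc_inj (f g : 'I_n -> nat) :
  (forall a, a <= n -> cumc f a = cumc g a) -> f =1 g.
Proof.
move=> h [t tn]; have := h t.+1 tn; have := h t (ltnW tn).
rewrite !(cumcS _ tn); lia.
Qed.

Lemma cumNE (A : Theta n r) i k :
  cumN A i k = \sum_(s < n) \sum_(t < n) ((s < i) * (t < k) * entry A s t).
Proof.
rewrite /cumN sum_mkc; apply: eq_bigr => s _; rewrite sum_mkc big_distrr /=.
by apply: eq_bigr => t _; rewrite mulnA.
Qed.

Lemma cumN_mono (A : Theta n r) i i' k k' : i <= i' -> k <= k' ->
  cumN A i k <= cumN A i' k'.
Proof.
move=> ii kk; rewrite !cumNE; apply: leq_sum => s _; apply: leq_sum => t _.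
case: (ltnP s i) => si; last by rewrite /= !mul0n.
case: (ltnP t k) => tk; last by rewrite /= muln0 mul0n.
by rewrite (leq_trans si ii) (leq_trans tk kk).
Qed.

Lemma cumN_super (A : Theta n r) i i' k k' : i <= i' -> k <= k' ->
  cumN A i' k + cumN A i k' <= cumN A i' k' + cumN A i k.
Proof.
move=> ii kk; rewrite !cumNE -!big_split /=; apply: leq_sum => s _.
rewrite -!big_split /=; apply: leq_sum => t _.
rewrite -!mulnDl; apply: leq_mul => //.
have hi : (s < i) ==> (s < i') by apply/implyP => h; apply: leq_trans h ii.
have hk : (t < k) ==> (t < k') by apply/implyP => h; apply: leq_trans h kk.
by move: hi hk; case: (s < i); case: (s < i'); case: (t < k); case: (t < k').
Qed.

Lemma cumN_n1 (A : Theta n r) k : cumN A n k = cumc (co A) k.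
Proof.
rewrite /cumN /cumc sum_ltge // exchange_big /=; apply: eq_bigr => t _.
by rewrite /co; apply: eq_bigr.
Qed.

Lemma cumN_n2 (A : Theta n r) i : cumN A i n = cumc (ro A) i.
Proof. by apply: eq_bigr => s _; rewrite sum_ltge. Qed.

Lemma cumN0l (A : Theta n r) k : cumN A 0 k = 0.
Proof. exact: sum_lt0. Qed.

Lemma cumN0r (A : Theta n r) i : cumN A i 0 = 0.
Proof. by rewrite /cumN big1 // => s _; rewrite sum_lt0. Qed.

Lemma sum_pairs (f : 'I_n -> 'I_n -> nat) :
  \sum_(ij : 'I_n * 'I_n) f ij.1 ij.2 = \sum_(s < n) \sum_(t < n) f s t.
Proof. by rewrite pair_big. Qed.

Lemma cumN_nn (A : Theta n r) : cumN A n n = r.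
Proof.
rewrite /cumN sum_ltge //; under eq_bigr do rewrite sum_ltge //.
rewrite -(sum_pairs (entry A)); move: (valP A) => /eqP {2}<-.
by apply: eq_bigr => [[s t]] _.
Qed.

Lemma cumN_S1 (A : Theta n r) (i : 'I_n) k :
  cumN A i.+1 k = cumN A i k + \sum_(t < n | t < k) entry A i t.
Proof.
rewrite /cumN (sum_ltS _ (ltn_ord i)).
by have -> : Ordinal (ltn_ord i) = i by apply: val_inj.
Qed.

Lemma entry_cum (A : Theta n r) (i j : 'I_n) :
  cumN A i.+1 j.+1 + cumN A i j = cumN A i.+1 j + cumN A i j.+1 + entry A i j.
Proof.
rewrite !cumN_S1 (sum_ltS _ (ltn_ord j)).
have -> : Ordinal (ltn_ord j) = j by apply: val_inj.
lia.
Qed.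

Lemma Theta_inj (A B : Theta n r) : (forall i j, entry A i j = entry B i j) -> A = B.
Proof.
move=> h; apply: val_inj; apply/ffunP => [[i j]]; apply: val_inj; exact: h.
Qed.

Lemma cumN_inj (A B : Theta n r) :
  (forall i j, i <= n -> j <= n -> cumN A i j = cumN B i j) -> A = B.
Proof.
move=> h; apply: Theta_inj => i j.
have := entry_cum A i j; have := entry_cum B i j.
rewrite !h ?(ltnW (ltn_ord i)) ?(ltnW (ltn_ord j)) ?(ltn_ord i) ?(ltn_ord j) //; lia.
Qed.

End Cum.

Definition md (P : nat -> nat -> nat) i j := (P i.+1 j.+1 + P i j) - (P i.+1 j + P i j.+1).

Section Build.
Variables n r : nat.
Variable P : nat -> nat -> nat.
Hypothesis H0l : forall j, j <= n -> P 0 j = 0.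
Hypothesis H0r : forall i, i <= n -> P i 0 = 0.
Hypothesis Hs : forall i j, i < n -> j < n -> P i.+1 j + P i j.+1 <= P i.+1 j.+1 + P i j.
Hypothesis Hn : P n n = r.

Lemma tel_row (i : 'I_n) j : j <= n ->
  \sum_(t < n | t < j) md P i t + P i j = P i.+1 j.
Proof.
elim: j => [|j IH] jn.
  by rewrite sum_lt0 !H0r // ltnW.
rewrite (sum_ltS _ jn) /=.
have := IH (ltnW jn); have := Hs (ltn_ord i) jn; rewrite /md /=; lia.
Qed.

Lemma tel i j : i <= n -> j <= n ->
  \sum_(s < n | s < i) \sum_(t < n | t < j) md P s t = P i j.
Proof.
elim: i => [|i IH] iN jn; first by rewrite sum_lt0 H0l.
rewrite (sum_ltS _ iN) IH ?(ltnW iN) //.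
by rewrite addnC (tel_row (Ordinal iN) jn).
Qed.

Lemma md_le (i j : 'I_n) : md P i j <= r.
Proof.
rewrite -Hn -(tel (leqnn n) (leqnn n)) sum_ltge // (bigD1 i) //= sum_ltge //.
rewrite (bigD1 j) //= -addnA; exact: leq_addr.
Qed.

Lemma build_ex : exists C : Theta n r,
  (forall i j : 'I_n, entry C i j = md P i j) /\
  (forall i j, i <= n -> j <= n -> cumN C i j = P i j).
Proof.
pose f : mxT n r := [ffun ij : 'I_n * 'I_n => inord (md P ij.1 ij.2)].
have ef : forall i j : 'I_n, (f (i, j) : nat) = md P i j.
  by move=> i j; rewrite ffunE inordK // ltnS md_le.
have hs : \sum_(ij : 'I_n * 'I_n) (f ij : nat) == r.
  have -> : \sum_(ij : 'I_n * 'I_n) (f ij : nat) = \sum_(s < n) \sum_(t < n) (f (s, t) : nat).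
    by rewrite pair_big; apply: eq_bigr => [[s t]].
  under eq_bigr do under eq_bigr do rewrite ef.
  rewrite -Hn -(tel (leqnn n) (leqnn n)) sum_ltge //.
  by apply/eqP; apply: eq_bigr => s _; rewrite sum_ltge.
exists (exist _ f hs).
have ee : forall i j : 'I_n, entry (exist _ f hs) i j = md P i j by move=> i j; exact: ef.
split => // i j iN jn; rewrite -tel //.
by apply: eq_bigr => s _; apply: eq_bigr => t _; rewrite ee.
Qed.
End Build.

Lemma charP_eqM I x M M' P : M =1 M' -> charP I x M P -> charP I x M' P.
Proof.
move=> e [H1 [k Ik Ek]]; split.
  by move=> k' Ik'; rewrite -e; apply: H1.
by exists k => //; rewrite -e.
Qed.

Section Prod.
Variables n r : nat.
Local Notation I := (iota 0 n.+1).
Local Notation T := (Theta n r).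

Lemma memI k : (k \in I) = (k <= n).
Proof. by rewrite mem_iota. Qed.

Lemma prodN_char (A B : T) i j :
  charP I (fun k => cumN A i k + cumN B k j) (cumc (co A)) (prodN A B i j).
Proof.
rewrite /prodN -(big_mkord xpredT (fun kk => cumN A i kk + cumN B kk j - cumc (co A) kk)).
rewrite /index_iota subn0; apply: charP_max; exists 0; first by rewrite memI.
by rewrite cumN0r cumN0l cumc0.
Qed.

Lemma gp_cum (A B C : T) i j : genprod A B C -> i <= n -> j <= n ->
  cumN C i j = prodN A B i j.
Proof.
case/andP => _ /forallP h iN jN.
by have /forallP /(_ (Ordinal (jN : j < n.+1))) /eqP := h (Ordinal (iN : i < n.+1)).
Qed.

Lemma gp_co (A B C : T) : genprod A B C -> co A =1 ro B.
Proof. by case/andP => /forallP h _ t; apply/eqP. Qed.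

Lemma gp_intro (A B C : T) : co A =1 ro B ->
  (forall i j, i <= n -> j <= n -> cumN C i j = prodN A B i j) -> genprod A B C.
Proof.
move=> h1 h2; apply/andP; split; first by apply/forallP => t; rewrite h1.
apply/forallP => i; apply/forallP => j; apply/eqP; apply: h2; by rewrite -ltnS.
Qed.

Lemma prodN_n1 (A B : T) k : co A =1 ro B -> prodN A B n k = cumN B n k.
Proof.
move=> e; apply: (charP_uniq (prodN_char A B n k)); split.
  move=> kk Ik; rewrite memI in Ik; rewrite cumN_n1.
  have := @cumN_mono _ _ B kk n k k Ik (leqnn k); lia.
by exists n; rewrite ?memI // cumN_n1; lia.
Qed.

Lemma prodN_n2 (A B : T) i : co A =1 ro B -> prodN A B i n = cumN A i n.
Proof.
move=> e; apply: (charP_uniq (prodN_char A B i n)); split.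
  move=> kk Ik; rewrite memI in Ik; rewrite (cumN_n2 B) (cumc_ext _ (fun t => esym (e t))).
  have := @cumN_mono _ _ A i i kk n (leqnn i) Ik; lia.
by exists n; rewrite ?memI // cumN_nn -cumN_n1 cumN_nn.
Qed.

Lemma gp_coD (A B D : T) : genprod A B D -> co D =1 co B.
Proof.
move=> g; apply: cumc_inj => a aN.
by rewrite -!cumN_n1 (gp_cum g) // prodN_n1 //; exact: gp_co g.
Qed.

Lemma gp_roD (A B D : T) : genprod A B D -> ro D =1 ro A.
Proof.
move=> g; apply: cumc_inj => a aN.
by rewrite -!cumN_n2 (gp_cum g) // prodN_n2 //; exact: gp_co g.
Qed.

Lemma gp_uniq (A B C C' : T) : genprod A B C -> genprod A B C' -> C = C'.
Proof.
by move=> g g'; apply: cumN_inj => i j iN jN; rewrite (gp_cum g) // (gp_cum g').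
Qed.

Lemma prodN_super (A B : T) i j : i < n -> j < n ->
  prodN A B i.+1 j + prodN A B i j.+1 <= prodN A B i.+1 j.+1 + prodN A B i j.
Proof.
move=> iN jN.
have [H1 [k1 I1 E1]] := prodN_char A B i.+1 j.
have [H2 [k2 I2 E2]] := prodN_char A B i j.+1.
have [H3 _] := prodN_char A B i.+1 j.+1.
have [H4 _] := prodN_char A B i j.
case: (leqP k1 k2) => kk.
  have := H3 _ I2; have := H4 _ I1.
  have := cumN_super A (leqnSn i) kk.
  lia.
have := H3 _ I1; have := H4 _ I2.
have := cumN_super B (ltnW kk) (leqnSn j).
lia.
Qed.

Lemma gp_ex (A B : T) : co A =1 ro B -> exists C, genprod A B C.
Proof.
move=> e.
have [||||C [_ hC]] := build_ex (n := n) (r := r) (P := prodN A B).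
- move=> j jN; apply: (charP_uniq (prodN_char A B 0 j)); split.
    move=> k Ik; rewrite cumN0l add0n (cumc_ext _ e) -cumN_n2.
    by apply: cumN_mono; rewrite // -memI.
  by exists 0; rewrite ?memI // ?cumN0l ?cumN0r cumc0.
- move=> i iN; apply: (charP_uniq (prodN_char A B i 0)); split.
    move=> k Ik; rewrite cumN0r addn0 add0n -cumN_n1.
    by apply: cumN_mono; rewrite // -memI.
  by exists 0; rewrite ?memI // ?cumN0l ?cumN0r cumc0.
- exact: prodN_super.
- by rewrite prodN_n1 // cumN_nn.
by exists C; apply: gp_intro.
Qed.

Lemma assoc_val (A B D E F : T) i j : genprod A B D -> genprod B E F ->
  i <= n -> j <= n -> prodN D E i j = prodN A F i j.
Proof.
move=> g1 g2 iN jN.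
apply: (@charT_uniq I (fun k l => cumN A i k + cumN B k l + cumN E l j)
          (cumc (co A)) (cumc (co B))).
  apply: (@charT_left _ _ _ _ (fun l => cumN D i l)).
    move=> l Il; rewrite (gp_cum g1) // -?memI //; exact: prodN_char.
  apply: charP_eqM (prodN_char D E i j) => a; exact: cumc_ext (gp_coD g1).
apply: (@charT_right _ _ _ _ (fun k => cumN F k j)).
  move=> k Ik; rewrite (gp_cum g2) // -?memI //; exact: prodN_char.
exact: prodN_char.
Qed.

End Prod.

Section Alg.
Import GRing.Theory.
Local Open Scope ring_scope.
Variable k : fieldType.
Variables n r : nat.
Local Notation T := (Theta n r).

Lemma g_L1 (A B D E F C : T) : genprod A B D -> genprod D E C -> genprod B E F ->
  genprod A F C.
Proof.
move=> g1 g2 g3; apply: gp_intro.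
  by move=> t; rewrite (gp_roD g3) (gp_co g1).
move=> i j iN jN; rewrite (gp_cum g2) //; exact: assoc_val g1 g3 iN jN.
Qed.

Lemma g_L2 (A B D E F C : T) : genprod B E F -> genprod A F C -> genprod A B D ->
  genprod D E C.
Proof.
move=> g3 g4 g1; apply: gp_intro.
  by move=> t; rewrite (gp_coD g1) (gp_co g3).
move=> i j iN jN; rewrite (gp_cum g4) //; symmetry; exact: assoc_val g1 g3 iN jN.
Qed.

Lemma g_ex (A B E C : T) :
  [exists D, genprod A B D && genprod D E C] = [exists F, genprod B E F && genprod A F C].
Proof.
apply/existsP/existsP => [[D /andP [g1 g2]]|[F /andP [g3 g4]]].
  have [F g3] : exists F, genprod B E F.
    by apply: gp_ex => t; rewrite -(gp_coD g1) (gp_co g2).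
  by exists F; rewrite g3 (g_L1 g1 g2 g3).
have [D g1] : exists D, genprod A B D.
  by apply: gp_ex => t; rewrite (gp_co g4) (gp_roD g3).
by exists D; rewrite g1 (g_L2 g3 g4 g1).
Qed.

Lemma sum_pick (P : pred T) : (forall D D', P D -> P D' -> D = D') ->
  \sum_(D : T) ((P D)%:R : k) = ([exists D, P D])%:R.
Proof.
move=> u; case: existsP => [[D0 PD0]|nP].
  rewrite (bigD1 D0) //= big1 ?addr0 ?PD0 // => D ne.
  case: (boolP (P D)) => // PD; move: ne; by rewrite (u _ _ PD0 PD) eqxx.
by rewrite big1 // => D _; case: (boolP (P D)) => // PD; case: nP; exists D.
Qed.

Lemma key_sum (A B E C : T) :
  \sum_(D : T) (((genprod A B D)%:R : k) * (genprod D E C)%:R) =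
  \sum_(F : T) (((genprod B E F)%:R : k) * (genprod A F C)%:R).
Proof.
under eq_bigr do rewrite -natrM -/(nat_of_bool _) mulnb.
under [RHS]eq_bigr do rewrite -natrM mulnb.
rewrite !sum_pick ?g_ex //.
  by move=> F F' /andP [g _] /andP [g' _]; exact: gp_uniq g g'.
by move=> D D' /andP [g _] /andP [g' _]; exact: gp_uniq g g'.
Qed.

Lemma smul_assoc (x y z : S0 k n r) : smul (smul x y) z = smul x (smul y z).
Proof.
apply/ffunP => C; rewrite !ffunE.
transitivity (\sum_(A : T) \sum_(B : T) \sum_(E : T) (x A * y B * z E *
   \sum_(D : T) (((genprod A B D)%:R : k) * (genprod D E C)%:R))).
  under eq_bigr => D _ do under eq_bigr => E _ do rewrite ffunE !mulr_suml.
  under eq_bigr => D _ do under eq_bigr => E _ do under eq_bigr => A _ do rewrite !mulr_suml.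
  under eq_bigr do rewrite exchange_big.
  under eq_bigr do under eq_bigr do rewrite exchange_big.
  rewrite exchange_big; apply: eq_bigr => A _.
  rewrite exchange_big; apply: eq_bigr => B _.
  rewrite exchange_big; apply: eq_bigr => E _.
  rewrite mulr_sumr; apply: eq_bigr => D _.
  by rewrite !mulrA; congr (_ * _); rewrite -!mulrA; congr (_ * (_ * _)); exact: mulrC.
apply: eq_bigr => A _.
transitivity (\sum_(B : T) \sum_(E : T) (x A * y B * z E *
   \sum_(F : T) (((genprod B E F)%:R : k) * (genprod A F C)%:R))).
  by apply: eq_bigr => B _; apply: eq_bigr => E _; rewrite key_sum.
under [RHS]eq_bigr do rewrite ffunE mulr_sumr mulr_suml.
under [RHS]eq_bigr do under eq_bigr do rewrite mulr_sumr mulr_suml.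
rewrite [RHS]exchange_big /=; apply: eq_bigr => B _.
rewrite [RHS]exchange_big /=; apply: eq_bigr => E _.
rewrite mulr_sumr; apply: eq_bigr => F _.
by rewrite !mulrA.
Qed.

Lemma smulDl (x y z : S0 k n r) : smul (x + y) z = smul x z + smul y z.
Proof.
apply/ffunP => C; rewrite !ffunE -big_split; apply: eq_bigr => A _.
rewrite -big_split; apply: eq_bigr => B _; rewrite ffunE; by rewrite !mulrDl.
Qed.

Lemma smulZl c (x z : S0 k n r) : smul (sscale c x) z = sscale c (smul x z).
Proof.
apply/ffunP => C; rewrite !ffunE mulr_sumr; apply: eq_bigr => A _.
rewrite mulr_sumr; apply: eq_bigr => B _; by rewrite ffunE !mulrA.
Qed.

Lemma ebas_mul (A B C : T) : genprod A B C -> smul (ebas k A) (ebas k B) = ebas k C.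
Proof.
move=> g; apply/ffunP => D; rewrite !ffunE (bigD1 A) //=.
rewrite [X in _ + X]big1 ?addr0; last first.
  move=> A' ne; apply: big1 => B' _; by rewrite ffunE (negbTE ne) !mul0r.
rewrite (bigD1 B) //= [X in _ + X]big1 ?addr0; last first.
  move=> B' ne; by rewrite [ebas k B B']ffunE (negbTE ne) mulr0 mul0r.
rewrite !ffunE !eqxx !mul1r.
have -> : genprod A B D = (D == C).
  apply/idP/eqP => [g'|->//]; exact: gp_uniq g' g.
by [].
Qed.

End Alg.

Lemma bigmax_id_in (s : seq nat) (P : pred nat) :
  \max_(b <- s | P b) b = 0 \/ (\max_(b <- s | P b) b \in s /\ P (\max_(b <- s | P b) b)).
Proof.
elim: s => [|a s IH]; first by left; rewrite big_nil.
rewrite big_cons; case: ifP => Pa; last first.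
  by case: IH => [->|[h1 h2]]; [left|right; rewrite inE h1 orbT].
case: IH => [->|[h1 h2]].
  by right; rewrite maxn0 inE eqxx.
case: (leqP a (\max_(b <- s | P b) b)) => h.
  by right; rewrite inE h1 orbT.
by right; rewrite inE eqxx.
Qed.

Lemma bigmin_id_in (s : seq nat) (P : pred nat) x0 :
  let e := \big[minn/x0]_(b <- s | P b) b in
  [/\ e = x0 \/ (e \in s /\ P e), e <= x0 & forall b, b \in s -> P b -> e <= b].
Proof.
elim: s => [|a s IH] /=; first by rewrite big_nil; split => //; left.
rewrite big_cons; case: IH => [IH1 IH2 IH3]; case: ifP => Pa.
  split.
  - case: (leqP a (\big[minn/x0]_(b <- s | P b) b)) => h.
      by right; rewrite inE eqxx.
    case: IH1 => [->|[h1 h2]]; [left|right] => //.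
    by rewrite inE h1 orbT.
  - by rewrite geq_min IH2 orbT.
  - move=> b; rewrite inE => /orP [/eqP ->|bs] Pb; first by rewrite geq_min leqnn.
    by rewrite geq_min IH3 ?orbT.
split => //.
- by case: IH1 => [->|[h1 h2]]; [left|right; rewrite inE h1 orbT].
- move=> b; rewrite inE => /orP [/eqP ->|bs] Pb; first by rewrite Pa in Pb.
  exact: IH3.
Qed.

Lemma psums0 p : 0 \in psums p.
Proof. by apply/mapP; exists 0; rewrite ?take0 // mem_iota. Qed.

Lemma psumsN p : sumn p \in psums p.
Proof.
apply/mapP; exists (size p); first by rewrite mem_iota add0n ltnS leqnn.
by rewrite take_size.
Qed.

Lemma psums_le p b : b \in psums p -> b <= sumn p.
Proof.
case/mapP => i _ ->; have := sumn_cat (take i p) (drop i p).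
rewrite cat_take_drop => ->; exact: leq_addr.
Qed.

Lemma take_flatten_sumn (ss : seq (seq nat)) i :
  sumn (take i (map sumn ss)) = sumn (take (sumn (take i (map size ss))) (flatten ss)).
Proof.
elim: ss i => [|s ss IH] [|i] //=; first by rewrite take0.
rewrite take_cat ltnNge leq_addr /= addKn sumn_cat -IH.
by [].
Qed.

Lemma sumn_take_le i s : sumn (take i s) <= sumn s.
Proof. have := sumn_cat (take i s) (drop i s); rewrite cat_take_drop => ->; exact: leq_addr. Qed.

Lemma psums_refine m p b : refines m p -> b \in psums m -> b \in psums p.
Proof.
case=> ss [<- <-] /mapP [i _ ->]; apply/mapP.
exists (sumn (take i (map size ss))); last exact: take_flatten_sumn.
rewrite mem_iota add0n ltnS size_flatten; exact: sumn_take_le.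
Qed.

Section Olp.
Variables (n r : nat) (lam : 'I_n -> nat).
Local Notation L := (cumc lam).

Lemma Lmono a b : a <= b -> L a <= L b.
Proof. exact: cumc_mono. Qed.

Definition G (B : seq nat) a c := \max_(b <- B) (minn (L a) (L b) + minn (L c) (L b) - L b).

Lemma G_char B a c : 0 \in B ->
  charP B (fun b => minn (L a) (L b) + minn (L c) (L b)) L (G B a c).
Proof. move=> B0; apply: charP_max; exists 0 => //; rewrite cumc0; lia. Qed.

Lemma G_betw B a c b0 : 0 \in B -> b0 \in B -> a <= b0 -> b0 <= c -> G B a c = L a.
Proof.
move=> B0 Bb ab bc; apply: (charP_uniq (G_char a c B0)); split.
  move=> b _; lia.
exists b0 => //; have := Lmono ab; have := Lmono bc; lia.
Qed.

Lemma G_betw' B a c b0 : 0 \in B -> b0 \in B -> c <= b0 -> b0 <= a -> G B a c = L c.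
Proof.
move=> B0 Bb ab bc; apply: (charP_uniq (G_char a c B0)); split.
  move=> b _; lia.
exists b0 => //; have := Lmono ab; have := Lmono bc; lia.
Qed.

Lemma G_block B a c s e : 0 \in B -> s \in B -> e \in B ->
  s <= a <= e -> s <= c <= e -> (forall b, b \in B -> b <= s \/ e <= b) ->
  G B a c = L s + ((L a - L s + (L c - L s)) - (L e - L s)).
Proof.
move=> B0 Bs Be /andP [sa ae] /andP [sc ce] hB.
have := Lmono sa; have := Lmono ae; have := Lmono sc; have := Lmono ce.
move=> h1 h2 h3 h4.
apply: (charP_uniq (G_char a c B0)); split.
  move=> b Bb; case: (hB b Bb) => hb.
    have := Lmono hb; lia.
  have := Lmono hb; lia.
case: (leqP (L a + L c) (L s + L e)) => h.
  by exists s => //; lia.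
by exists e => //; lia.
Qed.

Lemma blk_facts p i : sumn p = n -> i < n ->
  let s := blk_start p i in let e := blk_end n p i in
  [/\ s \in psums p, s <= i & (forall b, b \in psums p -> b <= i -> b <= s)] /\
  [/\ e \in psums p, i < e, e <= n & (forall b, b \in psums p -> i < b -> e <= b)].
Proof.
move=> sp iN s e.
have hn : n \in psums p by rewrite -sp psumsN.
have [E1 E2 E3] := bigmin_id_in (psums p) (fun b => i < b) n.
have hs1 : s \in psums p /\ s <= i.
  case: (bigmax_id_in (psums p) (fun b => b <= i)) => h.
    by rewrite /s /blk_start h psums0.
  exact: h.
case: hs1 => hs1 hs2.
split; split => //.
- move=> b Bb bi; exact: (leq_bigmax_seq (F := fun b => b) b Bb bi).
- by rewrite /e /blk_end; case: E1 => [->|[]].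
- by rewrite /e /blk_end; case: E1 => [->|[]].
Qed.
Lemma olp_md p (i j : 'I_n) : sumn p = n ->
  (G (psums p) i.+1 j + G (psums p) i j.+1 <= G (psums p) i.+1 j.+1 + G (psums p) i j) /\
  olp_entry lam p i j = md (G (psums p)) i j.
Proof.
move=> sp.
have B0 := psums0 p.
have [[Bs si hs] [Be ie eN he]] := blk_facts sp (ltn_ord i).
have [[Bsj sjj hsj] _] := blk_facts sp (ltn_ord j).
move: Bs si hs Be ie eN he Bsj sjj hsj.
rewrite /olp_entry.
set s := blk_start p i; set e := blk_end n p i; set sj := blk_start p j.
move=> Bs si hs Be ie eN he Bsj sjj hsj.
have hB : forall b, b \in psums p -> b <= s \/ e <= b.
  move=> b Bb; case: (leqP b i) => h; [left; exact: hs | right; exact: he].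
have sjs : (sj == s) = (s <= j < e).
  apply/eqP/andP => [E|[h1 h2]].
    split; first by rewrite -E.
    rewrite ltnNge; apply/negP => ej; have := hsj _ Be ej; rewrite E; lia.
  apply/eqP; rewrite eqn_leq hsj //= andbT.
  by case: (hB _ Bsj) => // h; lia.
rewrite eq_sym sjs.
case: (boolP (s <= j < e)) => /= hj.
  move/andP: hj => [h1 h2].
  rewrite /md !(@G_block _ _ _ s e) //; try (apply/andP; split; lia).
  have := Lmono (ltnW (leq_ltn_trans h1 h2)); have := Lmono h1; have := Lmono si.
  have := Lmono (leqnSn i); have := Lmono (leqnSn j); have := Lmono ie; have := Lmono h2.
  move=> *; split; lia.
have [ej|js] : e <= j \/ j < s by lia.
  rewrite /md !(@G_betw _ _ _ e) //; try lia.
rewrite /md !(@G_betw' _ _ _ s) //; try lia.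
Qed.
End Olp.

Section OlpT.
Variables (n r : nat) (lam : 'I_n -> nat).
Hypothesis Hr : (\sum_(i < n) lam i)%N = r.
Local Notation L := (cumc lam).
Local Notation T := (Theta n r).

Lemma Ln : L n = r.
Proof. by rewrite /cumc sum_ltge. Qed.

Lemma exists_O p : sumn p = n -> exists O : T,
  (forall i j : 'I_n, entry O i j = olp_entry lam p i j) /\
  (forall i j, i <= n -> j <= n -> cumN O i j = G lam (psums p) i j).
Proof.
move=> sp; have B0 := psums0 p; have Bn : n \in psums p by rewrite -sp psumsN.
have [||||O [h1 h2]] := build_ex (n := n) (r := r) (P := G lam (psums p)).
- by move=> j jN; rewrite (@G_betw _ _ _ _ _ 0) // cumc0.
- by move=> i iN; rewrite (@G_betw' _ _ _ _ _ 0) // cumc0.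
- by move=> i j iN jN; have [] := olp_md lam (Ordinal iN) (Ordinal jN) sp.
- by rewrite (@G_betw _ _ _ _ _ n) // Ln.
exists O; split => // i j; rewrite h1.
by have [] := olp_md lam i j sp.
Qed.

Lemma olp_eq (k : fieldType) p (O : T) :
  (forall i j : 'I_n, entry O i j = olp_entry lam p i j) -> olp k r lam p = ebas k O.
Proof.
move=> hO; apply/ffunP => C; rewrite !ffunE; congr (GRing.natmul _ (nat_of_bool _)).
apply/forallP/eqP => [h|->].
  apply: Theta_inj => i j; rewrite hO; apply/eqP; exact: (forallP (h i) j).
by move=> i; apply/forallP => j; rewrite hO.
Qed.

Lemma O_co p (O : T) : sumn p = n ->
  (forall i j, i <= n -> j <= n -> cumN O i j = G lam (psums p) i j) ->
  co O =1 lam /\ ro O =1 lam.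
Proof.
move=> sp hO; have B0 := psums0 p; have Bn : n \in psums p by rewrite -sp psumsN.
split; apply: cumc_inj => a aN.
  by rewrite -cumN_n1 hO // (@G_betw' _ _ _ _ _ n).
by rewrite -cumN_n2 hO // (@G_betw _ _ _ _ _ n).
Qed.

Lemma G_prod (Bm Bp : seq nat) i j : 0 \in Bm -> 0 \in Bp ->
  {subset Bm <= Bp} -> (forall b, b \in Bm -> b <= n) ->
  charP (iota 0 n.+1) (fun k => G lam Bm i k + G lam Bp k j) L (G lam Bm i j).
Proof.
move=> Bm0 Bp0 sub le.
have [Hij [b Bb Eb]] := G_char lam i j Bm0.
split.
  move=> k _.
  have [_ [b1 Bb1 E1]] := G_char lam i k Bm0.
  have [_ [c Bc E2]] := G_char lam k j Bp0.
  have := Hij _ Bb1. lia.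
exists b; first by rewrite mem_iota add0n ltnS le.
have [H1 _] := G_char lam i b Bm0.
have [H2 _] := G_char lam b j Bp0.
have := H1 _ Bb; have := H2 _ (sub _ Bb).
have [_ [b1 Bb1 E1]] := G_char lam i b Bm0.
have [_ [c Bc E2]] := G_char lam b j Bp0.
have := Hij _ Bb1. lia.
Qed.

Lemma gp_O m p (Om Op : T) : sumn m = n -> sumn p = n ->
  {subset psums m <= psums p} ->
  (forall i j, i <= n -> j <= n -> cumN Om i j = G lam (psums m) i j) ->
  (forall i j, i <= n -> j <= n -> cumN Op i j = G lam (psums p) i j) ->
  genprod Om Op Om.
Proof.
move=> sm sp sub hm hp.
have [cm _] := O_co sm hm; have [_ rp] := O_co sp hp.
apply: gp_intro => [t|i j iN jN]; first by rewrite cm rp.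
apply: (charP_uniq _ (prodN_char Om Op i j)).
rewrite hm //.
apply: (charP_eqM (fun a => esym (cumc_ext a cm))).
have hle : forall b, b \in psums m -> b <= n by move=> b Bb; rewrite -sm; apply: psums_le.
apply: (charP_eq_in _ (G_prod i j (psums0 m) (psums0 p) sub hle)).
move=> k; rewrite mem_iota add0n ltnS => kN; by rewrite hm // hp.
Qed.
End OlpT.

Unset Implicit Arguments.
Set Strict Implicit.
Import GRing.Theory.
Local Open Scope ring_scope.

Theorem mainTheorem9 (k : fieldType) (n r : nat) (lam : 'I_n -> nat)
    (m p : seq nat) :
  (\sum_(i < n) lam i)%N = r ->
  is_decomp n m -> is_decomp n p -> refines m p ->
  (forall x : S0 k n r, in_lideal (olp k r lam m) x -> in_lideal (olp k r lam p) x) /\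
  exists pi : S0 k n r -> S0 k n r,
    [/\ (forall x y, in_lideal (olp k r lam p) x -> in_lideal (olp k r lam p) y ->
           pi (x + y) = pi x + pi y),
        (forall (c : k) x, in_lideal (olp k r lam p) x -> pi (sscale c x) = sscale c (pi x)),
        (forall s x, in_lideal (olp k r lam p) x -> pi (smul s x) = smul s (pi x)),
        (forall x, in_lideal (olp k r lam p) x -> in_lideal (olp k r lam m) (pi x)) &
        (forall x, in_lideal (olp k r lam m) x -> pi x = x)].
Proof.
move=> Hr /andP [_ /eqP sm] /andP [_ /eqP sp] ref.
have [Om [em cm]] := exists_O Hr sm.
have [Op [ep cp]] := exists_O Hr sp.
rewrite (olp_eq k em) (olp_eq k ep).
have sub : {subset psums m <= psums p} by move=> b; exact: psums_refine.
have g1 := gp_O Hr sm sp sub cm cp.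
have g2 := gp_O Hr sm sm (fun b (h : b \in psums m) => h) cm cm.
have e1 := ebas_mul k g1; have e2 := ebas_mul k g2.
split.
  by move=> x [s ->]; exists (smul s (ebas k Om)); rewrite smul_assoc e1.
exists (fun x => smul x (ebas k Om)); split.
- by move=> x y _ _; apply: smulDl.
- by move=> c x _; apply: smulZl.
- by move=> s x _; apply: smul_assoc.
- by move=> x _; exists x.
- by move=> x [s ->]; rewrite smul_assoc e2.
Qed.
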